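(* For any algebra $A$ we have $\mathfrak{P}^{\mathrm{c}}(A)=\mathrm{p}^{-1}\big(\mathfrak{P}^{\mathrm{c}}(A_{\mathrm{com}})\big)$, where $\mathrm{p}:A\to A_{\mathrm{com}}$ is the canonical projection onto the commutativization of $A$.
   Context: Fix a field $\mathbb{F}$; algebras are associative $\mathbb{F}$-algebras, not necessarily unital or commutative. $A_{\mathrm{com}}$ is the largest commutative quotient of $A$ (the quotient by the ideal generated by all commutators). For an algebra $A$, $\mathfrak{P}^{\mathrm{c}}(A)$ is the set of $a\in A$ such that for every commutative algebra $C$ and every algebra morphism $\varphi:A\to C[x]$, $\varphi(a)$ is a constant polynomial (lies in $C\subseteq C[x]$). (The paper defines it via a universal pro-algebra $\mathfrak{M}^{\mathrm{c}}_{A,\mathbb{F}[x]}$ and proves it equals this set.) *)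

(* Defs.v *)
From HB Require Import structures.
From mathcomp Require Import all_boot all_order all_algebra.
Set Implicit Arguments. Unset Strict Implicit. Unset Printing Implicit Defensive.
Import GRing.Theory.
Local Open Scope ring_scope.

(* Associative F-algebras, NOT necessarily unital nor commutative:
   an F-vector space with an associative F-bilinear multiplication. *)
Record algebra (F : fieldType) := Algebra {
  acar :> lmodType F;
  amul : acar -> acar -> acar;
  amulA : forall x y z, amul x (amul y z) = amul (amul x y) z;
  amulDl : forall x y z, amul (x + y) z = amul x z + amul y z;
  amulDr : forall x y z, amul x (y + z) = amul x y + amul x z;
  amulZl : forall (k : F) x y, amul (k *: x) y = k *: amul x y;
  amulZr : forall (k : F) x y, amul x (k *: y) = k *: amul x y
}.
Arguments amul {F} a _ _.

Definition is_commutative (F : fieldType) (C : algebra F) : Prop :=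
  forall x y : C, amul C x y = amul C y x.

Definition is_alg_morph (F : fieldType) (A B : algebra F) (f : A -> B) : Prop :=
  (forall (k : F) (x y : A), f (k *: x + y) = k *: f x + f y) /\
  (forall x y : A, f (amul A x y) = amul B (f x) (f y)).

(* The polynomial algebra C[x] over a (non-unital, commutative) algebra C is
   the algebra of finitely supported coefficient sequences nat -> C with
   coefficientwise linear structure and convolution product
   (c * d)_n = \sum_{i+j=n} c_i d_j. *)
Definition poly_morph (F : fieldType) (A C : algebra F) (phi : A -> nat -> C) : Prop :=
  [/\ (forall a : A, exists N : nat, forall n, (N <= n)%N -> phi a n = 0),
      (forall (k : F) (a b : A) (n : nat), phi (k *: a + b) n = k *: phi a n + phi b n)
    & (forall (a b : A) (n : nat),
         phi (amul A a b) n = \sum_(i < n.+1) amul C (phi a i) (phi b (n - i)%N))].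

Definition is_constant_poly (F : fieldType) (C : algebra F) (c : nat -> C) : Prop :=
  forall n : nat, (0 < n)%N -> c n = 0.

Definition Pc (F : fieldType) (A : algebra F) (a : A) : Prop :=
  forall (C : algebra F), is_commutative C ->
  forall phi : A -> nat -> C, poly_morph phi -> is_constant_poly (phi a).

Definition is_ideal (F : fieldType) (A : algebra F) (I : A -> Prop) : Prop :=
  [/\ I 0,
      (forall (k : F) x y, I x -> I y -> I (k *: x + y)),
      (forall x y, I y -> I (amul A x y))
    & (forall x y, I x -> I (amul A x y))].

Definition in_comm_ideal (F : fieldType) (A : algebra F) (a : A) : Prop :=
  forall I : A -> Prop, is_ideal I ->
  (forall x y : A, I (amul A x y - amul A y x)) -> I a.

(* (Q, p) is a presentation of the commutativization A_com = A / [A,A]: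
   p : A -> Q is a surjective algebra morphism whose kernel is exactly the
   ideal generated by the commutators. *)
Definition is_commutativization (F : fieldType) (A Q : algebra F) (p : A -> Q) : Prop :=
  [/\ is_alg_morph p,
      (forall q : Q, exists a : A, p a = q)
    & (forall a : A, p a = 0 <-> in_comm_ideal a)].

(* Main.v *)
Require Import Defs.
From mathcomp Require Import all_boot all_order all_algebra.
From Stdlib Require Import FunctionalExtensionality ClassicalEpsilon.
Set Implicit Arguments. Unset Strict Implicit. Unset Printing Implicit Defensive.
Import GRing.Theory.
Local Open Scope ring_scope.

Section Aux.
Variables (F : fieldType) (A C : algebra F) (phi : A -> nat -> C).
Hypothesis hphi : poly_morph phi.

Lemma pm0 n : phi 0 n = 0.
Proof.
case: hphi => _ hl _.
have h := hl 1 0 0 n; rewrite !scale1r addr0 in h.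
apply: (@addrI _ (phi 0 n)); rewrite addr0; exact: esym h.
Qed.

Lemma pmB a b n : phi (a - b) n = phi a n - phi b n.
Proof.
case: hphi => _ hl _.
have h := hl (-1) b a n; rewrite !scaleN1r [in LHS]addrC in h.
by rewrite h addrC.
Qed.

Lemma amul0r (c : C) : amul C c 0 = 0.
Proof.
have h := amulDr c 0 0; rewrite addr0 in h.
apply: (@addrI _ (amul C c 0)); rewrite addr0; exact: esym h.
Qed.

Lemma amulr0 (c : C) : amul C 0 c = 0.
Proof.
have h := amulDl 0 0 c; rewrite addr0 in h.
apply: (@addrI _ (amul C 0 c)); rewrite addr0; exact: esym h.
Qed.

Hypothesis Ccom : is_commutative C.

Lemma pm_comm x y n : phi (amul A x y - amul A y x) n = 0.
Proof.
case: hphi => _ _ hm.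
rewrite pmB !hm; apply/eqP; rewrite subr_eq0; apply/eqP.
rewrite [in RHS](reindex_inj rev_ord_inj) /=.
apply: eq_bigr => i _; rewrite subSS subKn; last by rewrite -ltnS.
exact: Ccom.
Qed.

Lemma pm_ker b : in_comm_ideal b -> forall n, phi b n = 0.
Proof.
case: hphi => _ hl hm.
move=> hb; apply: (hb (fun b => forall n, phi b n = 0)).
- split.
  + exact: pm0.
  + by move=> k x y hx hy n; rewrite hl hx hy scaler0 addr0.
  + move=> x y hy n; rewrite hm; apply: big1 => i _; by rewrite hy amul0r.
  + move=> x y hx n; rewrite hm; apply: big1 => i _; by rewrite hx amulr0.
- move=> x y n; exact: pm_comm.
Qed.
End Aux.

Theorem mainTheorem11 (F : fieldType) (A Q : algebra F) (p : A -> Q) :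
  is_commutativization p ->
  forall a : A, Pc a <-> Pc (p a).
Proof.
case=> [[pl pm] psurj pker] a; split.
- move=> Pa C Ccom psi [hf hl hm].
  apply: (Pa C Ccom (fun b => psi (p b))); split.
  + by move=> b; apply: hf.
  + by move=> k b c n; rewrite pl hl.
  + by move=> b c n; rewrite pm hm.
- move=> Pa C Ccom phi hphi.
  pose s (q : Q) : A := proj1_sig (constructive_indefinite_description _ (psurj q)).
  have ps q : p (s q) = q by exact: (proj2_sig (constructive_indefinite_description _ (psurj q))).
  have wd b c : p b = p c -> phi b = phi c.
    move=> e; apply: functional_extensionality_dep => n.
    have h : p (b - c) = 0.
      have := pl (-1) c b; rewrite !scaleN1r addrC => ->.
      by rewrite e addNr.
    have := pm_ker hphi Ccom ((pker _).1 h) n.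
    by rewrite (pmB hphi) => /eqP; rewrite subr_eq0 => /eqP.
  have key : phi a = phi (s (p a)) by apply: wd; rewrite ps.
  rewrite key.
  case: hphi => hf hl hm.
  apply: (Pa C Ccom (fun q => phi (s q))); split.
  + by move=> q; apply: hf.
  + move=> k q r n; rewrite -hl; congr (_ n); apply: wd.
    by rewrite pl !ps.
  + move=> q r n; rewrite -hm; congr (_ n); apply: wd.
    by rewrite pm !ps.
Qed.
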